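(* Consider an $N$-player distributionally robust game (as defined in the context) with ambiguity set $$\mathcal{F} = \{ Q : Q[\mathbf{W}\cdot\mathrm{vec}(\tilde{\mathbf{P}})\le\mathbf{h}] = 1,\ \mathbb{E}_Q[\mathrm{vec}\,\tilde{\mathbf{P}}] = \mathbf{m},\ \mathbb{E}_Q[\|\mathrm{vec}(\tilde{\mathbf{P}})-\mathbf{m}\|_1]\le s\},$$ where $\{\mathbf{P}:\mathbf{W}\mathrm{vec}(\mathbf{P})\le\mathbf{h}\}$ is a bounded polyhedral set containing $\mathbf{m}$ (i.e. $\mathbf{W}\mathbf{m}\le\mathbf{h}$) and $s\ge0$, in which all players are risk neutral ($\varepsilon_i=1$ for all $i$). Then its set of Distributionally Robust Optimization Equilibria equals the set of Nash equilibria of the complete information game with fixed payoff matrix $\boldsymbol{\Psi}$, where $\mathrm{vec}(\boldsymbol{\Psi})=\mathbf{m}$.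
   Context: A finite $N$-player game: player $i$ has actions $\{1,\dots,a_i\}$ and mixed strategy set $S_{a_i} = \{\mathbf{x}^i\in\mathbb{R}^{a_i} : \mathbf{x}^i\ge 0,\ \sum_{j=1}^{a_i} x^i_j = 1\}$; $S=\prod_{i} S_{a_i}$. A payoff matrix $\mathbf{P}\in\mathbb{R}^{N\times\prod_{k=1}^N a_k}$ has entries $\mathbf{P}^i_{(j_1,\dots,j_N)}$, the payoff to player $i$ when each player $k$ plays action $j_k$. The expected payoff is $\pi_i(\mathbf{P};\mathbf{x}^1,\dots,\mathbf{x}^N) = \sum_{j_1=1}^{a_1}\cdots\sum_{j_N=1}^{a_N}\mathbf{P}^i_{(j_1,\dots,j_N)}\prod_{k=1}^N x^k_{j_k}$. Write $\mathbf{x}^{-i}$ for the strategies of all players except $i$, and $(\mathbf{x}^{-i},\mathbf{u}^i)$ for the profile with $\mathbf{x}^i$ replaced by $\mathbf{u}^i$. $\mathrm{vec}(\mathbf{A})$ is the column vector obtained by stacking the rows of $\mathbf{A}$. $\tilde{\mathbf{P}}$ denotes a random payoff matrix. For a loss random variable $L$ and $\varepsilon\in(0,1]$, $Q\text{-CVaR}_\varepsilon(L) = \min_{\zeta\in\mathbb{R}} \zeta + \frac{1}{\varepsilon}\mathbb{E}_Q[L-\zeta]^+$, with $[x]^+=\max\{x,0\}$. Distributionally robust game: commonly known ambiguity set $\mathcal{F}$ of distributions $Q$ of $\tilde{\mathbf{P}}$ and risk levels $\varepsilon_i\in(0,1]$. A profile $(\mathbf{x}^1,\dots,\mathbf{x}^N)\in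 S$ is a Distributionally Robust Optimization Equilibrium iff for every $i$, $\mathbf{x}^i\in\arg\min_{\mathbf{u}^i\in S_{a_i}}\sup_{Q\in\mathcal{F}} Q\text{-CVaR}_{\varepsilon_i}[-\pi_i(\tilde{\mathbf{P}};\mathbf{x}^{-i},\mathbf{u}^i)]$. A Nash equilibrium of the game with fixed payoff matrix $\check{\mathbf{P}}$ is a profile in $S$ with $\mathbf{x}^i\in\arg\max_{\mathbf{u}^i\in S_{a_i}}\pi_i(\check{\mathbf{P}};\mathbf{x}^{-i},\mathbf{u}^i)$ for every $i$. *)

(* Defs.v *)
From HB Require Import structures.
From mathcomp Require Import all_boot all_order all_algebra.
From mathcomp Require Import all_classical all_reals all_analysis.
Unset Printing Implicit Defensive.
Import Order.TTheory GRing.Theory Num.Theory.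
Local Open Scope classical_set_scope.
Local Open Scope ring_scope.

Section Game.
Context {R : realType} {N : nat} (a : 'I_N -> nat).

Definition profile := {dffun forall k : 'I_N, 'I_(a k)}.

Definition ncols := #|{: profile}|.

Definition vdim := (N * ncols)%N.

(* payoff matrices P in R^{N x prod_k a_k}; column of profile p is enum_rank p *)
Definition payoff_mx := 'M[R]_(N, ncols).

Definition simplex {n : nat} : set 'rV[R]_n :=
  [set u | (forall j, 0 <= u 0 j) /\ \sum_(j < n) u 0 j = 1].

Definition strat_profile := forall k : 'I_N, 'rV[R]_(a k).

Definition in_S (x : strat_profile) : Prop := forall k, simplex (x k).

Definition deviate (x : strat_profile) (i : 'I_N) (u : 'rV[R]_(a i))
  : strat_profile := @dfwith _ (fun k : 'I_N => 'rV[R]_(a k)) x i u.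

Definition exp_payoff (P : payoff_mx) (i : 'I_N) (x : strat_profile) : R :=
  \sum_(p : profile) P i (enum_rank p) * \prod_(k < N) x k 0 (p k).

(* vec(P) : rows of P stacked, as a column vector *)
Definition vec (P : payoff_mx) : 'cV[R]_vdim := (mxvec P)^T.

(* the random vector vec(P~) lives in R^vdim, modelled as vdim.-tuple R
   with the product Borel sigma-algebra *)
Definition sample := (vdim.-tuple R).

Definition col_of (v : sample) : 'cV[R]_vdim := \col_j tnth v j.

Definition mat_of (v : sample) : payoff_mx := vec_mx (col_of v)^T.

Definition CVaR (eps : R) (Q : probability sample R) (L : sample -> R)
  : \bar R :=
  ereal_inf [set ((zeta%:E + (eps^-1)%:E *
                   \int[Q]_v (Num.max (L v - zeta) 0)%:E)%E) | zeta in [set: R]].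

Definition worst_CVaR (F : set (probability sample R)) (eps : R)
  (L : sample -> R) : \bar R :=
  ereal_sup [set CVaR eps Q L | Q in F].

Definition DROE (F : set (probability sample R)) (eps : 'I_N -> R)
  (x : strat_profile) : Prop :=
  in_S x /\
  forall i : 'I_N,
    simplex (x i) /\
    forall u : 'rV[R]_(a i), simplex u ->
      (worst_CVaR F (eps i) (fun v => (- exp_payoff (mat_of v) i x)%R)
       <= worst_CVaR F (eps i) (fun v => (- exp_payoff (mat_of v) i (deviate x i u))%R))%E.

Definition Nash (P : payoff_mx) (x : strat_profile) : Prop :=
  in_S x /\
  forall i : 'I_N, forall u : 'rV[R]_(a i), simplex u ->
    exp_payoff P i (deviate x i u) <= exp_payoff P i x.

Definition polyhedron {K : nat} (W : 'M[R]_(K, vdim)) (h : 'cV[R]_K)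
  (c : 'cV[R]_vdim) : Prop := forall k, (W *m c) k 0 <= h k 0.

Definition bounded_polyhedron {K : nat} (W : 'M[R]_(K, vdim)) (h : 'cV[R]_K)
  : Prop := exists B : R, forall c, polyhedron W h c -> forall j, `|c j 0| <= B.

Definition ambiguity_set {K : nat} (W : 'M[R]_(K, vdim)) (h : 'cV[R]_K)
  (m : 'cV[R]_vdim) (s : R) : set (probability sample R) :=
  [set Q : probability sample R | Q [set v | polyhedron W h (col_of v)] = 1%E
        /\ (forall j : 'I_vdim,
              Q.-integrable [set: sample] (fun v => (tnth v j)%:E)
              /\ (\int[Q]_v (tnth v j)%:E = (m j 0)%:E)%E)
        /\ (\int[Q]_v (\sum_(j < vdim) `|tnth v j - m j 0|)%:E <= s%:E)%E].

End Game.

(* Main.v *)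
Require Import Defs.
From HB Require Import structures.
From mathcomp Require Import all_boot all_order all_algebra.
From mathcomp Require Import all_classical all_reals all_analysis.
From mathcomp Require Import measurable_realfun.
From mathcomp Require Import lra.
Import Order.TTheory GRing.Theory Num.Theory.
Local Open Scope ring_scope.

Section Aux.
Context (R : realType) (N : nat) (a : 'I_N -> nat) (m : 'cV[R]_(vdim a)).

Local Open Scope ereal_scope.

Lemma lin_int (Q : probability (sample a) R)
  (hQ : forall j : 'I_(vdim a), Q.-integrable [set: sample a] (fun v => (tnth v j)%:E)
              /\ \int[Q]_v (tnth v j)%:E = (m j 0)%:E)
  (I : finType) (f : I -> 'I_(vdim a)) (c : I -> R) :
  Q.-integrable [set: sample a] (fun v => (\sum_k tnth v (f k) * c k)%R%:E) /\
  \int[Q]_v (\sum_k tnth v (f k) * c k)%R%:E = (\sum_k m (f k) 0 * c k)%R%:E.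
Proof.
have hint k : Q.-integrable [set: sample a] (fun v => (tnth v (f k) * c k)%R%:E).
  exact: (integrableZr measurableT (c k) (hQ (f k)).1).
split.
  under eq_fun do rewrite -sumEFin.
  by apply: (integrable_sum measurableT) => k _; exact: hint.
under eq_integral do rewrite -sumEFin.
rewrite (integral_sum measurableT); last exact: hint.
rewrite -sumEFin; apply: eq_bigr => k _.
under eq_integral do rewrite EFinM.
by rewrite (integralZr measurableT (hQ (f k)).1) (hQ (f k)).2.
Qed.

Lemma CVaR1 (Q : probability (sample a) R) (A : set (sample a)) (L : sample a -> R)
  (e b : R) :
  measurable A -> Q A = 1 ->
  Q.-integrable [set: sample a] (EFin \o L) ->
  \int[Q]_v (L v)%:E = e%:E ->
  (forall v, A v -> (b <= L v)%R) ->
  CVaR a 1 Q L = e%:E.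
Proof.
move=> mA QA iL eL bL.
have mL : measurable_fun [set: sample a] L.
  by apply/measurable_EFinP; exact: (measurable_int Q iL).
have icst z : Q.-integrable [set: sample a] (EFin \o cst z).
  exact: finite_measure_integrable_cst.
have intB z : \int[Q]_v (L v - z)%R%:E = (e - z)%R%:E.
  under eq_integral do rewrite EFinB.
  rewrite (integralB_EFin measurableT iL (icst z)) eL.
  rewrite (integral_cst Q measurableT z%:E).
  transitivity (e%:E - z%:E * 1); last by rewrite mule1.
  by congr (_ - _ * _); exact: (probability_setT Q).
have iB z : Q.-integrable [set: sample a] (fun v => (L v - z)%R%:E).
  exact: (integrableB measurableT iL (icst z)).
have posE z : \int[Q]_v (Num.max (L v - z) 0)%R%:E
            = \int[Q]_v (fun v => (L v - z)%R%:E)^\+ v.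
  by apply: eq_integral => v _; rewrite funeposE EFin_max.
rewrite /CVaR invr1 /=.
apply/eqP; rewrite eq_le; apply/andP; split.
- apply: ge_ereal_inf; exists (b%:E + 1%:E * \int[Q]_v (Num.max (L v - b) 0)%R%:E).
    by exists b.
  rewrite mul1e posE (@ae_eq_integral _ _ _ Q _ (fun v => (L v - b)%R%:E)) //.
  + by rewrite intB -EFinD addrC subrK.
  + apply: measurable_funepos; apply/measurable_EFinP; exact: measurable_funB.
  + apply/measurable_EFinP; exact: measurable_funB.
  + exists (~` A)%classic; split => //; first exact: measurableC.
      by move: (probability_setC Q mA); rewrite QA subee // => H; exact: H.
    move=> v /= hv Av; apply: hv => _.
    by rewrite funeposE; apply/max_idPl; rewrite lee_fin subr_ge0 bL.
- apply: le_ereal_inf_tmp => _ [z _ <-].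
  rewrite mul1e posE.
  have := le_integral measurableT (iB z) (integrable_funepos measurableT (iB z)).
  move=> H.
  have {}H : ((e - z)%R%:E <= \int[Q]_v (fun v0 : sample a => (L v0 - z)%R%:E)^\+ v).
    rewrite -intB; apply: H => v _; by rewrite funeposE le_max lexx.
  move: H; case: (\int[Q]_v _) => [r| |] //=.
    rewrite lee_fin => H.
    suff -> : (z%:E + r%:E = (z + r)%R%:E) by rewrite lee_fin; lra.
    by [].
  by move=> _ /=; rewrite leey.
Qed.

Local Notation smp := (@sample R N a).
Local Open Scope classical_set_scope.
Local Open Scope ring_scope.

Lemma col_ofE (v : smp) j k : col_of a v j k = tnth v j.
Proof. by rewrite /col_of mxE. Qed.

Lemma meas_all (I : eqType) (S : I -> set (smp)) (r : seq I) :
  (forall k, measurable (S k)) ->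
  measurable [set v | forall k, k \in r -> S k v].
Proof.
move=> mS; elim: r => [|k r IH].
  rewrite (_ : [set v | _] = setT)%classic; first exact: measurableT.
  by apply/seteqP; split => v //= _ k.
rewrite (_ : [set v | _] = S k `&` [set v | forall k, k \in r -> S k v])%classic.
  exact: measurableI.
apply/seteqP; split => v /=.
  move=> H; split; first by apply: H; rewrite inE eqxx.
  by move=> k' kr; apply: H; rewrite inE kr orbT.
by move=> [Sk H] k'; rewrite inE => /orP[/eqP->//|]; exact: H.
Qed.

Lemma meas_lin (c : 'I_(vdim a) -> R) :
  measurable_fun [set: smp] (fun v : smp => \sum_j c j * tnth v j)%R.
Proof.
apply: measurable_sum => j.
apply: measurable_funM => //; exact: measurable_tnth.
Qed.

Lemma meas_poly {K : nat} (W : 'M[R]_(K, vdim a)) (h : 'cV[R]_K) :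
  measurable [set v : smp | polyhedron a W h (col_of a v)].
Proof.
have gE k : (fun v : smp => (W *m col_of a v) k 0) = (fun v => \sum_j W k j * tnth v j)%R.
  apply/funext => v; rewrite mxE; apply: eq_bigr => j _; by rewrite col_ofE.
have -> : [set v : smp | polyhedron a W h (col_of a v)] =
  [set v | forall k, k \in enum 'I_K -> [set v : smp | ((W *m col_of a v) k 0 <= h k 0)%R] v].
  apply/seteqP; split => v /=.
    by move=> Hv k _; exact: Hv.
  by move=> Hv k; apply: Hv; rewrite mem_enum.
apply: meas_all => k.
rewrite -[X in measurable X]setTI.
apply: measurable_fun_le => //; rewrite gE; exact: meas_lin.
Qed.

Lemma payoffE (w : 'cV[R]_(vdim a)) i (y : strat_profile a) :
  exp_payoff a (vec_mx w^T) i y =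
  \sum_p w (mxvec_index i (enum_rank p)) 0 * \prod_k y k 0 (p k).
Proof. by apply: eq_bigr => p _; rewrite !mxE. Qed.

Lemma worst {K : nat} (W : 'M[R]_(K, vdim a)) (h : 'cV[R]_K) (s : R) :
  bounded_polyhedron a W h -> polyhedron a W h m -> 0 <= s ->
  forall i (y : strat_profile a),
  worst_CVaR a (ambiguity_set a W h m s) 1
    (fun v => - exp_payoff a (mat_of a v) i y) =
  (- exp_payoff a (vec_mx m^T) i y)%:E.
Proof.
move=> [B hB] hm hs i y.
set f := fun p : profile a => mxvec_index i (enum_rank p).
set c := fun p : profile a => - \prod_k y k 0 (p k).
have LE : (fun v : smp => - exp_payoff a (mat_of a v) i y) =
          (fun v => \sum_p tnth v (f p) * c p).
  apply/funext => v; rewrite /mat_of payoffE -sumrN.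
  by apply: eq_bigr => p _; rewrite col_ofE mulrN.
have EE : - exp_payoff a (vec_mx m^T) i y = \sum_p m (f p) 0 * c p.
  by rewrite payoffE -sumrN; apply: eq_bigr => p _; rewrite mulrN.
have hF : forall Q, ambiguity_set a W h m s Q ->
    CVaR a 1 Q (fun v => - exp_payoff a (mat_of a v) i y) =
    (- exp_payoff a (vec_mx m^T) i y)%:E.
  move=> Q [QA [Qj _]].
  rewrite LE EE.
  have [iL eL] := lin_int Q Qj _ f c.
  apply: (@CVaR1 Q _ _ _ (- \sum_p B * `|c p|) (meas_poly W h) QA iL eL).
  move=> v Av; rewrite -sumrN; apply: ler_sum => p _.
  have := hB _ Av (f p); rewrite col_ofE => Hb.
  apply: (@le_trans _ _ (- `|tnth v (f p) * c p|)); last exact: lerNnormlW.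
  by rewrite lerN2 normrM; apply: ler_wpM2r.
pose vm : smp := [tuple m j 0 | j < vdim a].
have vmE j : tnth vm j = m j 0 by rewrite tnth_mktuple.
pose Q0 : probability smp R := \d_vm.
have hQ0 : ambiguity_set a W h m s Q0.
  split; [|split].
  - have hvm : polyhedron a W h (col_of a vm).
      have -> : col_of a vm = m by apply/matrixP => j k; rewrite col_ofE vmE ord1.
      exact: hm.
    have := @diracE _ _ R vm [set v : smp | polyhedron a W h (col_of a v)].
    by rewrite mem_set // => H; exact: H.
  - move=> j; have mj : measurable_fun [set: smp] (fun v : smp => (tnth v j)%:E).
      by apply/measurable_EFinP; exact: measurable_tnth.
    split.
      apply/integrableP; split => //.
      rewrite integral_dirac //; last by apply: measurableT_comp.
      by rewrite diracE mem_set // mul1e ltey.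
    by rewrite integral_dirac // diracE mem_set // mul1e vmE.
  - rewrite integral_dirac //.
      rewrite diracE mem_set // mul1e lee_fin.
      rewrite big1 // => j _; by rewrite vmE subrr normr0.
    apply/measurable_EFinP; apply: measurable_sum => j.
    apply: measurableT_comp => //; apply: measurable_funB => //.
    exact: measurable_tnth.
rewrite /worst_CVaR.
rewrite (_ : [set _ | Q in _] = [set (- exp_payoff a (vec_mx m^T) i y)%:E]).
  exact: ereal_sup1.
apply/seteqP; split.
  by move=> _ [Q HQ <-]; rewrite hF.
by move=> _ ->; exists Q0 => //; rewrite hF.
Qed.
End Aux.
Theorem proposition1 (R : realType) (N : nat) (a : 'I_N -> nat) (K : nat)
  (W : 'M[R]_(K, vdim a)) (h : 'cV[R]_K) (m : 'cV[R]_(vdim a)) (s : R) :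
  bounded_polyhedron a W h ->
  polyhedron a W h m ->
  0 <= s ->
  forall x : strat_profile a,
    DROE a (ambiguity_set a W h m s) (fun _ => 1) x <->
    Nash a (vec_mx m^T) x.
Proof.
move=> hb hm hs x; split.
- move=> [inS H]; split => // i u su.
  have := (H i).2 u su.
  by rewrite !(worst _ _ _ _ _ _ _ hb hm hs) lee_fin lerN2.
- move=> [inS H]; split => // i; split; first exact: inS.
  move=> u su.
  by rewrite !(worst _ _ _ _ _ _ _ hb hm hs) lee_fin lerN2; exact: H.
Qed.
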